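(* In an instance of the large-market pricing problem described in the context, let $\vec x^1,\vec x^2$ be buyer demand vectors with $\vec x^2\ge\vec x^1$ componentwise, and let $\vec z^1,\vec z^2$ be min-cost flows for $\vec x^1,\vec x^2$ respectively. Then $$\sum_t\left(C_t(z^2_t)-C_t(z^1_t)\right)\ge\sum_i r_i(\vec z^1)\,(x^2_i-x^1_i).$$
   Context: Finite item set $S$, finite set $B$ of buyer types, bipartite graph $G=(B\cup S,E)$, $S_i=\{t:(i,t)\in E\}$. Item $t$ has convex continuously differentiable production cost $C_t$ with derivative $c_t$. A feasible allocation for demand vector $\vec x$ (indexed by $B$, nonnegative) is $z_t(i)\ge0$ with $z_t(i)>0$ only if $(i,t)\in E$ and $\sum_tz_t(i)=x_i$; $z_t=\sum_iz_t(i)$. A min-cost flow for $\vec x$ is a feasible allocation minimizing $\sum_tC_t(z_t)$. For a min-cost flow $\vec z$, $r_i(\vec z)=\min_{(i,t)\in E}c_t(z_t)$, which equals the marginal cost of every item buyer type $i$ receives in $\vec z$. *)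

(* Defs.v *)
From HB Require Import structures.
From mathcomp Require Import all_boot all_order all_algebra.
From mathcomp Require Import all_classical all_reals all_analysis.
Set Implicit Arguments. Unset Strict Implicit. Unset Printing Implicit Defensive.
Import Order.TTheory GRing.Theory Num.Theory.
Import numFieldNormedType.Exports.
Local Open Scope ring_scope.
Local Open Scope classical_set_scope.

Section Market.
Variables (R : realType) (B S : finType).

Definition convex_nonneg (f : R -> R) : Prop :=
  forall x y l : R, 0 <= x -> 0 <= y -> 0 <= l -> l <= 1 ->
    f (l * x + (1 - l) * y) <= l * f x + (1 - l) * f y.

(* f : [0,+oo) -> R is continuously differentiable with derivative df:
   f and df are continuous on [0,+oo), and df is the derivative of f at
   every interior point x > 0 (hence df 0 is the right derivative at 0). *)
Definition C1_nonneg_with_deriv (f df : R -> R) : Prop :=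
  {within [set x : R | 0 <= x], continuous f} /\
  {within [set x : R | 0 <= x], continuous df} /\
  (forall x : R, 0 < x -> is_derive x 1 f (df x)).

(* An allocation z i t : amount of item t given to buyer type i. *)
Definition feasible (E : B -> S -> bool) (x : B -> R) (z : B -> S -> R) : Prop :=
  (forall i t, 0 <= z i t) /\
  (forall i t, ~~ E i t -> z i t = 0) /\
  (forall i, \sum_(t : S) z i t = x i).

Definition load (z : B -> S -> R) (t : S) : R := \sum_(i : B) z i t.

Definition total_cost (C : S -> R -> R) (z : B -> S -> R) : R :=
  \sum_(t : S) C t (load z t).

Definition min_cost_flow (E : B -> S -> bool) (C : S -> R -> R)
    (x : B -> R) (z : B -> S -> R) : Prop :=
  feasible E x z /\
  forall z', feasible E x z' -> total_cost C z <= total_cost C z'.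

(* r_i(z) = min_{(i,t) in E} c_t(z_t); by convention 0 when buyer type i
   has no incident edge (then x_i = 0 for every feasible demand). *)
Definition rprice (E : B -> S -> bool) (c : S -> R -> R) (z : B -> S -> R)
    (i : B) : R :=
  if [pick t | E i t] is Some t0 then
    \big[Num.min/ c t0 (load z t0)]_(t | E i t) c t (load z t)
  else 0.

End Market.

(* Main.v *)
Require Import Defs.
From HB Require Import structures.
From mathcomp Require Import all_boot all_order all_algebra.
From mathcomp Require Import all_classical all_reals all_analysis.
From mathcomp Require Import ring lra.
Import Order.TTheory GRing.Theory Num.Theory.
Import numFieldNormedType.Exports.
Local Open Scope ring_scope.
Local Open Scope classical_set_scope.
Lemma cont_eps (R : realType) (f : R -> R) (A : set R) x e :
  {within A, continuous f} -> A x -> 0 < e ->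
  exists2 d, 0 < d & forall y, A y -> `|y - x| < d -> `|f y - f x| < e.
Proof.
move=> hf Ax e0.
have := (proj1 (subspace_continuousP _ _) hf x Ax).
move=> /cvgr_dist_lt /(_ e e0).
rewrite /prop_near1 /within /=.
move=> /nbhs_ballP [d /= d0 hd].
exists d => // y Ay hy.
rewrite distrC. apply: (hd y) => //.
by rewrite -ball_normE /ball /= distrC.
Qed.

Lemma mvt0 (R : realType) (f df : R -> R) a b :
  C1_nonneg_with_deriv f df -> 0 <= a -> a < b ->
  exists2 c, a < c < b & f b - f a = df c * (b - a).
Proof.
move=> [hf [hdf hd]] a0 ab.
have [||c cab ->] := @MVT R f df a b ab.
- move=> x; rewrite in_itv /= => /andP[ax _]; apply: hd; exact: le_lt_trans ax.
- apply: continuous_subspaceW hf => y /=; rewrite in_itv /= => /andP[ay _].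
  exact: le_trans ay.
- by exists c => //; move: cab; rewrite in_itv.
Qed.

Lemma conv_chord (R : realType) (f : R -> R) x y l :
  convex_nonneg f -> 0 <= x -> 0 <= y -> 0 <= l -> l <= 1 ->
  f (x + l * (y - x)) - f x <= l * (f y - f x).
Proof.
move=> hc x0 y0 l0 l1.
have := hc y x l y0 x0 l0 l1.
have -> : l * y + (1 - l) * x = x + l * (y - x) by ring.
move=> h; apply: le_trans (lerB h (lexx _)) _.
by rewrite le_eqVlt; apply/orP; left; apply/eqP; ring.
Qed.

Lemma subgrad (R : realType) (f df : R -> R) x y :
  convex_nonneg f -> C1_nonneg_with_deriv f df -> 0 <= x -> 0 <= y ->
  df x * (y - x) <= f y - f x.
Proof.
move=> hc hC x0 y0.
have hdf := proj1 (proj2 hC).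
case: (ltgtP x y) => [xy|yx|<-]; last by rewrite subrr mulr0 subrr.
-
  suff : df x <= (f y - f x) / (y - x).
    by rewrite ler_pdivlMr ?subr_gt0.
  apply/ler_addgt0Pr => e e0.
  have [d d0 hd] := @cont_eps _ _ _ x e hdf x0 e0.
  set h := Num.min (d / 2) ((y - x) / 2).
  have h0 : 0 < h by rewrite lt_min !divr_gt0 ?subr_gt0.
  have hd2 : h < d by rewrite /h gt_min ltr_pdivrMr // ltr_pMr // ltr1n.
  have hyx : h < y - x by rewrite /h gt_min orbC ltr_pdivrMr ?subr_gt0 // ltr_pMr ?subr_gt0 // ltr1n.
  have [c /andP[xc cxh] hc'] := @mvt0 _ _ _ _ _ hC x0 (ltr_pwDr h0 (lexx x) : x < x + h).
  have hch := @conv_chord _ _ x y (h / (y - x)) hc x0 y0.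
  rewrite divr_ge0 ?(ltW h0) ?subr_ge0 ?(ltW xy) // in hch.
  rewrite ler_pdivrMr ?subr_gt0 // mul1r (ltW hyx) in hch.
  have {hch} := hch isT isT.
  rewrite -mulrA mulVf ?mulr1 ?subr_eq0 ?gt_eqF //.
  idtac.
  rewrite hc' addrAC subrr add0r => hch.
  have dc : df c <= (f y - f x) / (y - x).
    have e1 : h / (y - x) * (f y - f x) = (f y - f x) / (y - x) * h by ring.
    by rewrite -(ler_pM2r h0) -e1.
  have : `|df c - df x| < e.
    apply: hd; first by rewrite /=; apply: le_trans (ltW xc).
    rewrite ger0_norm ?subr_ge0 ?(ltW xc) //.
    by apply: lt_trans hd2; rewrite ltrBlDl.
  rewrite ltr_norml => /andP[h1 _].
  rewrite ltrBrDl ltrBlDr in h1.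
  apply: ltW; apply: lt_le_trans h1 _.
  by rewrite lerD2r.
-
  have xpos : 0 < x by apply: le_lt_trans yx.
  suff : (f x - f y) / (x - y) <= df x.
    rewrite ler_pdivrMr ?subr_gt0 // => h.
    by rewrite -opprB mulrN lerNl opprB.
  apply/ler_addgt0Pr => e e0.
  have [d d0 hd] := @cont_eps _ _ _ x e hdf x0 e0.
  set h := Num.min (d / 2) ((x - y) / 2).
  have h0 : 0 < h by rewrite lt_min !divr_gt0 ?subr_gt0.
  have hd2 : h < d by rewrite /h gt_min ltr_pdivrMr // ltr_pMr // ltr1n.
  have hyx : h < x - y by rewrite /h gt_min orbC ltr_pdivrMr ?subr_gt0 // ltr_pMr ?subr_gt0 // ltr1n.
  have xh0 : 0 <= x - h.
    by rewrite subr_ge0; apply: ltW; apply: lt_le_trans hyx _; rewrite lerBlDr lerDl.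
  have xhx : x - h < x by rewrite ltrBlDr ltrDl.
  have [c /andP[xc cxh] hc'] := @mvt0 _ _ _ _ _ hC xh0 xhx.
  have hch := @conv_chord _ _ x y (h / (x - y)) hc x0 y0.
  rewrite divr_ge0 ?(ltW h0) ?subr_ge0 ?(ltW yx) // in hch.
  rewrite ler_pdivrMr ?subr_gt0 // mul1r (ltW hyx) in hch.
  have {hch} := hch isT isT.
  have -> : x + h / (x - y) * (y - x) = x - h.
    by rewrite -[y - x]opprB mulrN -mulrA mulVf ?mulr1 ?subr_eq0 ?gt_eqF.
  move=> hch.
  have e2 : x - (x - h) = h by ring.
  rewrite e2 in hc'.
  have dc : (f x - f y) / (x - y) <= df c.
    have e1 : h / (x - y) * (f x - f y) = (f x - f y) / (x - y) * h by ring.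
    rewrite -(ler_pM2r h0) -e1 -hc'.
    have e3 : h / (x - y) * (f x - f y) = - (h / (x - y) * (f y - f x)) by ring.
    by rewrite e3 -[f x - f (x - h)]opprB lerN2.
  have : `|df c - df x| < e.
    apply: hd; first by rewrite /=; apply: le_trans (ltW xc).
    rewrite ler0_norm ?subr_le0 ?(ltW cxh) // opprB.
    by apply: lt_trans hd2; rewrite ltrBlDr -ltrBlDl.
  rewrite ltr_norml => /andP[_ h1].
  rewrite ltrBlDr in h1.
  apply: ltW; apply: le_lt_trans dc _.
  by rewrite addrC.
Qed.

Lemma sum_delta (R : realType) (T : finType) (i : T) (r : R) :
  \sum_(j : T) (j == i)%:R * r = r.
Proof.
rewrite (bigD1 i) //= eqxx mul1r big1 ?addr0 // => j /negbTE ->.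
by rewrite mul0r.
Qed.

Lemma load_ge0 (R : realType) (B S : finType) (E : B -> S -> bool) x (z : B -> S -> R) t :
  feasible E x z -> 0 <= load z t.
Proof. by move=> [h _]; apply: sumr_ge0. Qed.

Arguments load_ge0 {R B S E x z} t.

Lemma load_ge (R : realType) (B S : finType) (E : B -> S -> bool) x (z : B -> S -> R) i t :
  feasible E x z -> z i t <= load z t.
Proof.
move=> [h _]; rewrite /load (bigD1 i) //= lerDl; apply: sumr_ge0 => *; exact: h.
Qed.

Arguments load_ge {R B S E x z} i t.

Lemma kkt (R : realType) (B S : finType) (E : B -> S -> bool)
    (C c : S -> R -> R)
    (hconv : forall t, convex_nonneg (C t))
    (hC1 : forall t, C1_nonneg_with_deriv (C t) (c t))
    x (z : B -> S -> R) (hz : min_cost_flow E C x z) i t s :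
  0 < z i t -> E i s -> c t (load z t) <= c s (load z s).
Proof.
move=> zit Eis; rewrite leNgt; apply/negP => lt.
have [hf hmin] := hz.
have [hnn [hE hsum]] := hf.
have st : s != t by apply/eqP => est; rewrite est ltxx in lt.
set g := c t (load z t) - c s (load z s).
have g0 : 0 < g by rewrite subr_gt0.
have g20 : 0 < g / 2 by rewrite divr_gt0.
have [d1 d10 hd1] := @cont_eps _ _ _ (load z s) _ (proj1 (proj2 (hC1 s))) (load_ge0 s hf) g20.
have [d2 d20 hd2] := @cont_eps _ _ _ (load z t) _ (proj1 (proj2 (hC1 t))) (load_ge0 t hf) g20.
set ep := Num.min (z i t) (Num.min (d1 / 2) (d2 / 2)).
have ep0 : 0 < ep by rewrite !lt_min zit !divr_gt0.
have epz : ep <= z i t by rewrite ge_min lexx.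
have epd1 : ep < d1.
  by rewrite !gt_min ltr_pdivrMr // ltr_pMr // ltr1n orbT.
have epd2 : ep < d2.
  by rewrite !gt_min [X in _ || (_ || X)]ltr_pdivrMr // ltr_pMr // ltr1n !orbT.
pose dl (u : S) := (u == s)%:R * ep - (u == t)%:R * ep.
pose z' (j : B) (u : S) := z j u + (j == i)%:R * dl u.
have hf' : feasible E x z'.
  split; [|split].
  - move=> j u; rewrite /z' /dl; case: eqVneq => [->|ji]; last first.
      by rewrite mul0r addr0.
    rewrite mul1r; case: (eqVneq u s) => [->|us].
      by rewrite (negbTE st) mul1r mul0r subr0 addr_ge0 ?hnn ?(ltW ep0).
    rewrite mul0r sub0r; case: (eqVneq u t) => [->|ut].
      by rewrite mul1r subr_ge0.
    by rewrite mul0r oppr0 addr0.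
  - move=> j u nE; rewrite /z' hE // /dl; case: eqVneq => [eji|ji]; last first.
      by rewrite mul0r addr0.
    subst j; rewrite mul1r add0r.
    case: (eqVneq u s) => [eus|us]; first by rewrite eus Eis in nE.
    case: (eqVneq u t) => [eut|ut]; last by rewrite !mul0r subr0.
    by move: zit; rewrite -eut hE // ltxx.
  - move=> j; rewrite /z' big_split /= hsum -mulr_sumr /dl sumrB !sum_delta subrr.
    by rewrite mulr0 addr0.
have hl u : load z' u = load z u + dl u.
  by rewrite /load /z' big_split /= -/(load z u) (eq_bigr (fun j => (j == i)%:R * dl u)) ?sum_delta.
have := hmin z' hf'.
rewrite -subr_ge0 /total_cost -sumrB.
rewrite (bigD1 t) //= (bigD1 s) //= big1; last first.
  move=> u /andP[ut us]; rewrite hl /dl (negbTE ut) (negbTE us) !mul0r subrr addr0.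
  by rewrite subrr.
rewrite addr0 !hl /dl eqxx (negbTE st) eq_sym (negbTE st) !mul0r !mul1r sub0r subr0.
have at0 : 0 <= load z t - ep.
  by rewrite subr_ge0; apply: le_trans epz (load_ge i t hf).
have as0 : 0 <= load z s + ep by rewrite addr_ge0 ?(ltW ep0) ?(load_ge0 s hf).
have h1 := @subgrad _ _ _ (load z t - ep) (load z t) (hconv t) (hC1 t) at0 (load_ge0 t hf).
have h2 := @subgrad _ _ _ (load z s + ep) (load z s) (hconv s) (hC1 s) as0 (load_ge0 s hf).
have c1 : `|c t (load z t - ep) - c t (load z t)| < g / 2.
  apply: hd2; first exact: at0.
  by rewrite addrAC subrr add0r normrN gtr0_norm.
have c2 : `|c s (load z s + ep) - c s (load z s)| < g / 2.
  apply: hd1; first exact: as0.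
  by rewrite addrAC subrr add0r gtr0_norm.
move: c1 c2; rewrite !ltr_norml => /andP[c1 _] /andP[_ c2].
have e1 : load z t - (load z t - ep) = ep by ring.
have e2 : load z s - (load z s + ep) = - ep by ring.
rewrite e1 e2 in h1 h2.
have key : (c s (load z s + ep) - c t (load z t - ep)) * ep < 0.
  rewrite pmulr_llt0 //.
  rewrite /g in c1 c2.
  lra.
rewrite eqxx mul1r.
rewrite mulrBl in key; rewrite mulrN in h2.
move=> H.
set A := c s _ * ep in key h2; set B' := c t _ * ep in key h1.
lra.
Qed.

Arguments kkt {R B S E C c} hconv hC1 {x z} hz i t s.

Local Close Scope classical_set_scope.

Theorem lemma13 (R : realType) (B S : finType) (E : B -> S -> bool)
    (C c : S -> R -> R)
    (hconv : forall t, convex_nonneg (C t))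
    (hC1 : forall t, C1_nonneg_with_deriv (C t) (c t))
    (x1 x2 : B -> R) (z1 z2 : B -> S -> R)
    (hx1 : forall i, 0 <= x1 i) (hx12 : forall i, x1 i <= x2 i)
    (hz1 : min_cost_flow E C x1 z1) (hz2 : min_cost_flow E C x2 z2) :
  \sum_(t : S) (C t (load z2 t) - C t (load z1 t))
    >= \sum_(i : B) rprice E c z1 i * (x2 i - x1 i).
Proof.
have hf1 := proj1 hz1; have hf2 := proj1 hz2.
have [nn1 [E1 s1]] := hf1; have [nn2 [E2 s2]] := hf2.
apply: le_trans (_ : _ <= \sum_t c t (load z1 t) * (load z2 t - load z1 t)) _; last first.
  apply: ler_sum => t _; apply: (@subgrad _ (C t) (c t)); [exact: hconv|exact: hC1|exact: (load_ge0 t hf1)|exact: (load_ge0 t hf2)].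
have -> : \sum_t c t (load z1 t) * (load z2 t - load z1 t) =
          \sum_i \sum_t c t (load z1 t) * (z2 i t - z1 i t).
  rewrite exchange_big /=; apply: eq_bigr => t _.
  by rewrite /load -sumrB mulr_sumr.
apply: ler_sum => i _.
have key : forall t, rprice E c z1 i * z1 i t = c t (load z1 t) * z1 i t /\
                     rprice E c z1 i * z2 i t <= c t (load z1 t) * z2 i t.
  move=> t; rewrite /rprice; case: pickP => [t0 Et0|nE]; last first.
    by rewrite E1 ?E2 ?nE // !mulr0.
  case: (boolP (E i t)) => Eit; last by rewrite E1 ?E2 // !mulr0.
  have le1 : \big[Num.min/c t0 (load z1 t0)]_(t | E i t) c t (load z1 t) <= c t (load z1 t).
    exact: bigmin_le_cond.
  split; last by rewrite ler_wpM2r.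
  have := nn1 i t; rewrite le_eqVlt => /orP[/eqP <-|zpos]; first by rewrite !mulr0.
  congr (_ * _); apply/eqP; rewrite eq_le le1 /=.
  apply: le_bigmin; first exact: (kkt hconv hC1 hz1 i t t0 zpos Et0).
  move=> s Es; exact: (kkt hconv hC1 hz1 i t s zpos Es).
rewrite -s1 -s2 -sumrB mulr_sumr; apply: ler_sum => t _.
have [k1 k2] := key t.
by rewrite !mulrBr k1 lerD2r.
Qed.
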